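(* For integers $0\le k\le n-1$ and $\lambda\in\mathbb C$, \[ d^k_n(\lambda)=\big(n+(\lambda-1)\big)\,d^k_{n-1}(\lambda)-(\lambda-1)(n-k-1)\,d^k_{n-2}(\lambda), \] where the last term is interpreted as $0$ when $k=n-1$.
   Context: For $\lambda\in\mathbb C$ and integers $0\le k\le n$, define $e^k_n(\lambda)$ by $e^n_n(\lambda)=n!$ and, for $1\le k\le n$, $e^{k-1}_n(\lambda)=e^k_n(\lambda)+(\lambda-1)e^{k-1}_{n-1}(\lambda)$. Put $d^k_n(\lambda)=e^k_n(\lambda)/k!$. (For nonnegative integer $\lambda$, $d^k_n(\lambda)$ counts permutations of $[n]$ whose first $k$ entries are decreasing, where each fixed point among the last $n-k$ positions is given one of $\lambda$ colours.) *)

(* Defs.v *)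
From mathcomp Require Import all_boot all_order all_algebra.
Set Implicit Arguments. Unset Strict Implicit. Unset Printing Implicit Defensive.
Import Order.TTheory GRing.Theory Num.Theory.
Local Open Scope ring_scope.

(* Auxiliary reindexing: eaux l n j = e^{n-j}_n(l) for j <= n.
   eaux l n 0 = n!,  eaux l n (j+1) = eaux l n j + (l-1) * eaux l (n-1) j,
   which is exactly e^{k-1}_n = e^k_n + (l-1) e^{k-1}_{n-1} with k = n - j. *)
Fixpoint eaux {C : numClosedFieldType} (l : C) (n j : nat) : C :=
  match j with
  | 0 => (n`!)%:R
  | j'.+1 => eaux l n j' + (l - 1) * eaux l n.-1 j'
  end.

(* e^k_n(l), meaningful for 0 <= k <= n. *)
Definition ecoef {C : numClosedFieldType} (l : C) (n k : nat) : C :=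
  eaux l n (n - k).

Definition dcoef {C : numClosedFieldType} (l : C) (n k : nat) : C :=
  ecoef l n k / (k`!)%:R.

Lemma ecoef_nn {C : numClosedFieldType} (l : C) (n : nat) : ecoef l n n = (n`!)%:R.
Proof. by rewrite /ecoef subnn. Qed.

Lemma ecoef_rec {C : numClosedFieldType} (l : C) (n k : nat) : (1 <= k <= n)%N ->
  ecoef l n k.-1 = ecoef l n k + (l - 1) * ecoef l n.-1 k.-1.
Proof.
case: k => // k /andP[_ hk]; rewrite /ecoef /=.
have -> : (n - k = (n - k.+1).+1)%N by rewrite subnSK.
rewrite /=; congr (_ + _ * eaux _ _ _).
by case: n hk => // n hk; rewrite subSS.
Qed.

(* Main.v *)
Require Import Defs.
From mathcomp Require Import all_boot all_order all_algebra.
From mathcomp Require Import ring.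
Import Order.TTheory GRing.Theory Num.Theory.
Local Open Scope ring_scope.

Lemma Qlem {C : numClosedFieldType} (l : C) {J : nat} {m : nat} :  (J <= m)%N ->
  eaux l m.+1 J.+1 = (m.+1%:R + (l-1)) * eaux l m J - (l-1) * J%:R * eaux l m.-1 J.-1.
Proof.
move=> hm; elim: J m hm => [|J IH] m hm.
  rewrite /= factS natrM; ring.
case: m hm => // m hm.
have IH1 := IH m.+1 (ltnW hm).
have IH2 := IH m hm.
have e1 : eaux l m.+2 J.+2 = eaux l m.+2 J.+1 + (l-1) * eaux l m.+1 J.+1 by [].
rewrite e1 IH1.
have h3 : eaux l m.+1 J = eaux l m.+1 J.+1 - (l-1) * eaux l m J.
  have -> : eaux l m.+1 J.+1 = eaux l m.+1 J + (l-1) * eaux l m J by [].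
  by rewrite addrK.
rewrite h3 IH2.
case: J {e1 IH IH1 IH2 hm h3} => [|J].
  rewrite /= !mulr0 !mul0r !subr0; ring.
have -> : eaux l m J.+1 = eaux l m J + (l-1) * eaux l m.-1 J by [].
rewrite /=; ring.
Qed.

Theorem mainTheorem6 (C : numClosedFieldType) (l : C) (n k : nat) (hk : (k < n)%N) :
  dcoef l n k =
    (n%:R + (l - 1)) * dcoef l n.-1 k
    - (if k == n.-1 then 0 else (l - 1) * (n - k - 1)%:R * dcoef l n.-2 k).
Proof.
case: n hk => // m hk.
rewrite /dcoef /ecoef /= subSn // (Qlem l (leq_subr k m : (m - k <= m)%N)).
case: eqP => [->|hne].
  rewrite subnn /=; ring.
have -> : (m - k).-1 = (m.-1 - k)%N by rewrite -!subn1 subnAC.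
rewrite subn1 /=; ring.
Qed.
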